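(* Let $1\le\ell\le n$ and fix $m$ with $0\le m\le\ell$. For every $v\in\bigoplus_{s=0}^m\mathcal{Y}_s$, \[\sum_{i,j=1}^n\mathbf{V}_{ij}(v)\ge\big((\ell-m)n-\ell^2\big)\|v\|^2.\]
   Context: Vectors in $\mathbb{R}^{\binom{n}{\ell}}$ are indexed by $\ell$-subsets of $[n]$. For a sequence $\varphi=(a_1,b_1,\ldots,a_s,b_s)$ of $2s$ distinct elements of $[n]$, $u^\varphi_S=\prod_{i=1}^s(\mathbf{1}_{a_i\in S}-\mathbf{1}_{b_i\in S})$ for $|S|=\ell$ ($u^\varnothing$ is the all-ones vector), and $\mathcal{Y}_s=\mathrm{span}\{u^\varphi:|\varphi|=2s\}$. The voting matrix $\mathbf{V}(v)$ is the symmetric $n\times n$ matrix with $\mathbf{V}_{ii}(v)=0$ and $\mathbf{V}_{ij}(v)=\frac12\sum_{|S|=|T|=\ell}v_Sv_T\mathbf{1}_{S\triangle T=\{i,j\}}$ for $i\ne j$. *)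

(* Defs.v *)
From HB Require Import structures.
From mathcomp Require Import all_boot all_order all_algebra.
Set Implicit Arguments. Unset Strict Implicit. Unset Printing Implicit Defensive.
Import Order.TTheory GRing.Theory Num.Theory.
Local Open Scope ring_scope.

(* A vector of R^{binom(n,l)} is a function on subsets of [n] = 'I_n;
   only its values on l-subsets are ever used. *)
Definition vec (R : Type) (n : nat) := {set 'I_n} -> R.

(* phi = (a_1,b_1,...,a_s,b_s) encoded as a pair of maps a b : 'I_s -> 'I_n,
   with phi i = (a_i, b_i).  All 2s entries must be distinct. *)
Definition seq_distinct (n s : nat) (phi : {ffun 'I_s -> 'I_n * 'I_n}) : bool :=
  [forall i, forall j,
     ((i != j) ==> ((phi i).1 != (phi j).1) && ((phi i).2 != (phi j).2))
     && ((phi i).1 != (phi j).2)].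

Definition u_vec (R : pzRingType) (n s : nat) (phi : {ffun 'I_s -> 'I_n * 'I_n})
  : vec R n :=
  fun S => \prod_(i < s) (((phi i).1 \in S)%:R - ((phi i).2 \in S)%:R).

Definition inY (R : pzRingType) (n l s : nat) (v : vec R n) : Prop :=
  exists c : {ffun 'I_s -> 'I_n * 'I_n} -> R,
    forall S : {set 'I_n}, #|S| = l ->
      v S = \sum_(phi | seq_distinct phi) c phi * u_vec R phi S.

Definition inYsum (R : pzRingType) (n l m : nat) (v : vec R n) : Prop :=
  exists y : nat -> vec R n,
    (forall s, (s <= m)%N -> inY l s (y s)) /\
    forall S : {set 'I_n}, #|S| = l -> v S = \sum_(s < m.+1) y s S.

Definition sqnorm (R : pzRingType) (n l : nat) (v : vec R n) : R :=
  \sum_(S : {set 'I_n} | #|S| == l) v S ^+ 2.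

Definition Vmat (R : fieldType) (n l : nat) (v : vec R n) (i j : 'I_n) : R :=
  if i == j then 0 else
  2^-1 * \sum_(S : {set 'I_n} | #|S| == l) \sum_(T : {set 'I_n} | #|T| == l)
           v S * v T * (((S :\: T) :|: (T :\: S)) == [set i; j])%:R.

(* Main.v *)
Require Import Defs.
From HB Require Import structures.
From mathcomp Require Import all_boot all_order all_algebra.
From mathcomp Require Import ring lra zify.
Import Order.TTheory GRing.Theory Num.Theory.
Local Open Scope ring_scope.

Definition uu (R : realFieldType) (n s : nat) (phi : 'I_s -> 'I_n * 'I_n)
  (X : {set 'I_n}) : R :=
  \prod_(i < s) (((phi i).1 \in X)%:R - ((phi i).2 \in X)%:R).

Definition Dist (n s : nat) (phi : 'I_s -> 'I_n * 'I_n) :=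
  forall i j : 'I_s, (phi i).1 != (phi j).2 /\
    (i != j -> (phi i).1 != (phi j).1 /\ (phi i).2 != (phi j).2).
Arguments uu R {n s} phi X.
Arguments Dist {n s} phi.

Lemma uu_agree (R : realFieldType) n s (phi : 'I_s -> 'I_n * 'I_n) z (X Y : {set 'I_n}) :
  (forall i, ((phi i).1 != z) && ((phi i).2 != z)) ->
  (forall q, q != z -> (q \in X) = (q \in Y)) -> uu R phi X = uu R phi Y.
Proof.
move=> Hz HXY; apply: eq_bigr => i _.
by case/andP: (Hz i) => /HXY -> /HXY ->.
Qed.

Lemma uu_rec (R : realFieldType) n s (phi : 'I_s.+1 -> 'I_n * 'I_n) X :
  uu R phi X = (((phi ord0).1 \in X)%:R - ((phi ord0).2 \in X)%:R)
     * uu R (fun i => phi (lift ord0 i)) X.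
Proof. by rewrite /uu big_ord_recl. Qed.

Lemma chiD1 (R : realFieldType) n (S : {set 'I_n}) x : x \in S -> forall z,
  ((z \in S :\ x)%:R : R) = (z \in S)%:R - (x == z)%:R.
Proof.
move=> xS z; rewrite in_setD1; case: (eqVneq x z) => [<-|ne].
  by rewrite xS subrr.
by rewrite subr0.
Qed.

Lemma chiU1 (R : realFieldType) n (S : {set 'I_n}) y : y \notin S -> forall z,
  ((z \in y |: S)%:R : R) = (z \in S)%:R + (y == z)%:R.
Proof.
move=> yS z; rewrite in_setU1; case: (eqVneq y z) => [<-|ne].
  by rewrite (negPf yS) add0r.
by rewrite addr0.
Qed.

Lemma sum_eq_in (R : realFieldType) n (A : {set 'I_n}) a :
  \sum_(x in A) ((x == a)%:R : R) = (a \in A)%:R.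
Proof.
case: (boolP (a \in A)) => aA.
  rewrite (bigD1 a) //= eqxx big1 ?addr0 // => x /andP[_ /negPf ->] //.
rewrite big1 // => x xA; case: eqP xA => // ->; by rewrite (negPf aA).
Qed.

Lemma sum_delta (R : realFieldType) n (A : {set 'I_n}) a b :
  \sum_(x in A) (((x == a)%:R - (x == b)%:R) : R) = (a \in A)%:R - (b \in A)%:R.
Proof. by rewrite sumrB !sum_eq_in. Qed.

Lemma negb_nat (R : realFieldType) (b : bool) : ((~~ b)%:R : R) = 1 - b%:R.
Proof. by case: b; rewrite ?subrr ?subr0. Qed.

Lemma delta_sub (R : realFieldType) n s (phi : 'I_s -> 'I_n * 'I_n) (p1 p2 x : 'I_n) (X Y : {set 'I_n}) :
  (forall i, [&& (phi i).1 != p1, (phi i).1 != p2, (phi i).2 != p1 & (phi i).2 != p2]) ->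
  (forall q, q != x -> (q \in X) = (q \in Y)) ->
  (((x == p1)%:R - (x == p2)%:R) : R) * uu R phi X
   = ((x == p1)%:R - (x == p2)%:R) * uu R phi Y.
Proof.
move=> Hp HXY.
case: (eqVneq x p1) => [Ex|n1].
  congr (_ * _); apply: (@uu_agree _ _ _ _ x) => // i; rewrite Ex.
  by case/and4P: (Hp i) => -> _ -> _.
case: (eqVneq x p2) => [Ex|n2].
  congr (_ * _); apply: (@uu_agree _ _ _ _ x) => // i; rewrite Ex.
  by case/and4P: (Hp i) => _ -> _ ->.
by rewrite subrr !mul0r.
Qed.

Arguments chiD1 R {n S x}.
Arguments chiU1 R {n S y}.
Definition lam (R : realFieldType) (l c k : R) := l * c - k * (l + c) + k * k - k.
Arguments lam {R}.

Lemma eig (R : realFieldType) n (S : {set 'I_n}) s (phi : 'I_s -> 'I_n * 'I_n) :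
  Dist phi ->
  [/\ \sum_(x in S) uu R phi (S :\ x) = (#|S|%:R - s%:R) * uu R phi S,
      \sum_(y in ~:S) uu R phi (y |: S) = (#|~:S|%:R - s%:R) * uu R phi S &
      \sum_(x in S) \sum_(y in ~:S) uu R phi (y |: (S :\ x))
        = lam #|S|%:R #|~:S|%:R s%:R * uu R phi S].
Proof.
elim: s phi => [|s IH] phi Hd.
  have u1 : forall X, uu R phi X = 1 by move=> X; rewrite /uu big_ord0.
  rewrite !u1 /lam !mulr1 !mul0r ?subr0 ?addr0 ?subr0; split.
  - by under eq_bigr do rewrite u1; rewrite sumr_const.
  - by under eq_bigr do rewrite u1; rewrite sumr_const.
  - under eq_bigr do under eq_bigr do rewrite u1.
    by rewrite !sumr_const mulrC mulr_natr.
set p := phi ord0; set phi' := fun i => phi (lift ord0 i).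
have Hd' : Dist phi'.
  move=> i j; case: (Hd (lift ord0 i) (lift ord0 j)) => h1 h2; split; first exact: h1.
  by move=> ne; apply: h2; rewrite (inj_eq (@lift_inj _ ord0)).
have Hp : forall i, [&& (phi' i).1 != p.1, (phi' i).1 != p.2, (phi' i).2 != p.1
                     & (phi' i).2 != p.2].
  move=> i; have ne : lift ord0 i != ord0 by rewrite eq_sym neq_lift.
  have [a1 a2] := Hd (lift ord0 i) ord0; have [b1 _] := Hd ord0 (lift ord0 i).
  case: (a2 ne) => c1 c2.
  by rewrite /phi' /p c1 a1 c2 eq_sym b1.
have [IG IH2 IM] := IH phi' Hd'.
have E : forall X, uu R phi X = ((p.1 \in X)%:R - (p.2 \in X)%:R) * uu R phi' X.
  by move=> X; rewrite uu_rec.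
set f : R := (p.1 \in S)%:R - (p.2 \in S)%:R.
set d := fun x : 'I_n => (((x == p.1)%:R - (x == p.2)%:R) : R).
split.
- transitivity (\sum_(x in S) (f * uu R phi' (S :\ x) - d x * uu R phi' S)).
    apply: eq_bigr => x xS; rewrite E !(chiD1 R xS).
    rewrite (_ : d x * uu R phi' S = d x * uu R phi' (S :\ x)); first by rewrite /d /f; ring.
    apply: esym; apply: delta_sub => // q qx; by rewrite in_setD1 qx.
  rewrite sumrB -mulr_sumr -mulr_suml IG sum_delta E -natr1 -/f; ring.
- transitivity (\sum_(y in ~:S) (f * uu R phi' (y |: S) + d y * uu R phi' S)).
    apply: eq_bigr => y; rewrite in_setC => yS; rewrite E !(chiU1 R yS).
    rewrite (_ : d y * uu R phi' S = d y * uu R phi' (y |: S)); first by rewrite /d /f; ring.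
    apply: esym; apply: delta_sub => // q qy; by rewrite in_setU1 (negPf qy).
  rewrite big_split /= -mulr_sumr -mulr_suml IH2 sum_delta !in_setC !negb_nat E -natr1 /f; ring.
- transitivity (\sum_(x in S) \sum_(y in ~:S) (f * uu R phi' (y |: (S :\ x))
       - d x * uu R phi' (y |: S) + d y * uu R phi' (S :\ x))).
    apply: eq_bigr => x xS; apply: eq_bigr => y; rewrite in_setC => yS.
    have yS' : y \notin S :\ x by rewrite in_setD1 (negPf yS) andbF.
    rewrite E !(chiU1 R yS') !(chiD1 R xS).
    rewrite (_ : d y * uu R phi' (S :\ x) = d y * uu R phi' (y |: (S :\ x))).
      rewrite (_ : d x * uu R phi' (y |: S) = d x * uu R phi' (y |: (S :\ x))).
        by rewrite /d /f; ring.
      apply: esym; apply: delta_sub => // q qx; by rewrite !in_setU1 in_setD1 qx.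
    apply: esym; apply: delta_sub => // q qy; by rewrite in_setU1 (negPf qy).
  under eq_bigr do rewrite big_split /= sumrB -mulr_sumr -mulr_sumr -mulr_suml.
  rewrite big_split /= sumrB -mulr_sumr -mulr_suml -mulr_sumr IM IH2 IG.
  rewrite !sum_delta !in_setC !negb_nat E -natr1 /f /lam; ring.
Qed.


Lemma sd_Dist n s (phi : {ffun 'I_s -> 'I_n * 'I_n}) :
  seq_distinct phi -> Dist (fun i => phi i).
Proof.
move=> /forallP H i j; move/forallP: (H i) => /(_ j) /andP[/implyP h1 h2].
split => // ne; by case/andP: (h1 ne) => -> ->.
Qed.

Lemma sd_card n s (phi : 'I_s -> 'I_n * 'I_n) : Dist phi -> (s + s <= n)%N.
Proof.
move=> Hd.
pose g (k : ('I_s + 'I_s)%type) : 'I_n :=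
  match k with inl i => (phi i).1 | inr i => (phi i).2 end.
have ginj : injective g.
  move=> [i|i] [j|j] /= E.
  - case: (eqVneq i j) => [->//|ne]; have [_ h] := Hd i j.
    by case: (h ne); rewrite E eqxx.
  - by have [h _] := Hd i j; rewrite E eqxx in h.
  - by have [h _] := Hd j i; rewrite E eqxx in h.
  - case: (eqVneq i j) => [->//|ne]; have [_ h] := Hd i j.
    by case: (h ne); rewrite E eqxx.
by have := leq_card g ginj; rewrite card_sum !card_ord.
Qed.

Lemma sum_bool_card n (P : pred 'I_n) : (\sum_(j < n) (P j : nat) = #|[set j | P j]|)%N.
Proof. by rewrite -sum1dep_card [RHS]big_mkcond; apply: eq_bigr => j _; case: (P j). Qed.

Lemma count2 n (D : {set 'I_n}) :
  (\sum_(i < n) \sum_(j < n) ((i != j) && (D == [set i; j])) = (#|D| == 2) * 2)%N.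
Proof.
case: (boolP (#|D| == 2)) => H.
  have E : forall i j, ((i != j) && (D == [set i; j])) = [&& i \in D, j \in D & i != j].
    move=> i j; apply/andP/and3P => [[ne /eqP ->]|[iD jD ne]].
      by rewrite !inE !eqxx orbT ne.
    split => //; rewrite eq_sym eqEcard cards2 ne (eqP H) leqnn andbT.
    by apply/subsetP => z; rewrite !inE => /orP[]/eqP->.
  under eq_bigr do under eq_bigr do rewrite E.
  transitivity (\sum_(i < n) ((i \in D) : nat))%N; last first.
    by rewrite sum_bool_card (_ : [set j | j \in D] = D) ?(eqP H) //; apply/setP => z; rewrite inE.
  apply: eq_bigr => i _; rewrite sum_bool_card.
  case: (boolP (i \in D)) => iD /=.
    rewrite (_ : [set j | _] = D :\ i); last by apply/setP => z; rewrite !inE andbC eq_sym.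
    by have := cardsD1 i D; rewrite iD (eqP H) add1n => -[<-].
  by rewrite (_ : [set j | _] = set0) ?cards0 //; apply/setP => z; rewrite !inE.
rewrite big1 // => i _; rewrite big1 // => j _.
case: (boolP (i != j)) => //= ne; case: eqP => // ED.
by move: H; rewrite ED cards2 ne.
Qed.

Definition adj n (S T : {set 'I_n}) : nat := (#|(S :\: T) :|: (T :\: S)| == 2).
Arguments adj {n}.

Lemma sumV (R : realFieldType) n l (v : vec R n) :
  \sum_(i < n) \sum_(j < n) Vmat l v i j =
  \sum_(S : {set 'I_n} | #|S| == l) \sum_(T : {set 'I_n} | #|T| == l)
     v S * v T * (adj S T)%:R.
Proof.
have E : forall i j, Vmat l v i j = 2^-1 * \sum_(S : {set 'I_n} | #|S| == l)
     \sum_(T : {set 'I_n} | #|T| == l)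
     v S * v T * ((i != j) && (((S :\: T) :|: (T :\: S)) == [set i; j]))%:R.
  move=> i j; rewrite /Vmat; case: eqP => [->|ne].
    rewrite big1 ?mulr0 // => S _; rewrite big1 // => T _; by rewrite /= mulr0.
  by [].
under eq_bigr do under eq_bigr do rewrite E.
under eq_bigr do rewrite -mulr_sumr.
rewrite -mulr_sumr.
under eq_bigr do rewrite exchange_big.
under eq_bigr do under eq_bigr do rewrite exchange_big.
rewrite exchange_big.
under eq_bigr do rewrite exchange_big.
rewrite mulr_sumr; apply: eq_bigr => S _; rewrite mulr_sumr; apply: eq_bigr => T _.
under eq_bigr do rewrite -mulr_sumr.
rewrite -mulr_sumr.
rewrite (_ : \sum_(i < n) \sum_(j < n) _ = ((adj S T * 2)%N)%:R).
  by rewrite natrM; field.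
rewrite /adj -count2 natr_sum; apply: eq_bigr => i _; by rewrite natr_sum.
Qed.


Lemma card_swap n (S : {set 'I_n}) x y : x \in S -> y \in ~: S ->
  #|y |: (S :\ x)| = #|S|.
Proof.
move=> xS; rewrite in_setC => yS.
rewrite cardsU1 in_setD1 (negPf yS) andbF /= (cardsD1 x S) xS.
by [].
Qed.

Lemma sum_set1 (R : realFieldType) n (A S : {set 'I_n}) : A \subset S ->
  \sum_(x in S) ((A == [set x])%:R : R) = (#|A| == 1)%:R.
Proof.
move=> AS; case: (boolP (#|A| == 1)) => [/cards1P [a Ea]|H].
  have aS : a \in S by apply: (subsetP AS); rewrite Ea set11.
  rewrite (bigD1 a) //= Ea eqxx big1 ?addr0 // => x /andP[_ xa].
  case: eqP => // /set1_inj E; by rewrite E eqxx in xa.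
rewrite big1 // => x _; case: eqP => // hA; by rewrite hA cards1 in H.
Qed.

Lemma lemN (R : realFieldType) n (S T : {set 'I_n}) : #|S| = #|T| ->
  \sum_(x in S) \sum_(y in ~:S) ((T == y |: (S :\ x))%:R : R) = (adj S T)%:R.
Proof.
move=> HST.
have E : forall x y, x \in S -> y \notin S ->
    (T == y |: (S :\ x)) = (S :\: T == [set x]) && (T :\: S == [set y]).
  move=> x y xS yS.
  have xy : (x == y) = false by apply/negbTE; apply: contraNneq yS => <-.
  have yx : (y == x) = false by rewrite eq_sym.
  apply/eqP/andP => [->|[/eqP h1 /eqP h2]].
    split; apply/eqP/setP => z; rewrite !inE.
      case: (eqVneq z x) => [->|zx]; first by rewrite ?xS ?eqxx ?xy.
      by case: (eqVneq z y) => [->|zy]; case: (z \in S); rewrite /= ?andbF.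
    case: (eqVneq z y) => [->|zy]; first by rewrite ?(negPf yS).
    by case: (z \in S); rewrite /= ?andbF.
  apply/setP => z; move/setP: h1 => /(_ z); move/setP: h2 => /(_ z); rewrite !inE.
  case: (eqVneq z y) => [->|zy]; first by rewrite (negPf yS) /= => ->.
  case: (eqVneq z x) => [->|zx]; first by rewrite xS /= => _; case: (x \in T).
  by case: (z \in S); case: (z \in T).
transitivity (\sum_(x in S) \sum_(y in ~:S)
   ((S :\: T == [set x])%:R * (T :\: S == [set y])%:R : R)).
  apply: eq_bigr => x xS; apply: eq_bigr => y; rewrite in_setC => yS.
  by rewrite E // -mulnb natrM.
under eq_bigr do rewrite -mulr_sumr.
rewrite -mulr_suml !sum_set1 ?subsetDl //; last first.
  by apply/subsetP => z; rewrite !inE => /andP[].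
have k1 : #|S :\: T| = #|T :\: S| by rewrite !cardsD HST setIC.
have k2 : #|(S :\: T) :|: (T :\: S)| = (#|S :\: T| + #|T :\: S|)%N.
  rewrite cardsU (_ : _ :&: _ = set0) ?cards0 ?subn0 //.
  by apply/setP => z; rewrite !inE; case: (z \in S); case: (z \in T).
rewrite /adj k2 -k1 -natrM; case: #|S :\: T| => [|[|k]] //.
by rewrite !addSn addnS.
Qed.

Lemma adj_sum (R : realFieldType) n l (S : {set 'I_n}) (b : vec R n) : #|S| = l ->
  \sum_(T : {set 'I_n} | #|T| == l) (adj S T)%:R * b T
    = \sum_(x in S) \sum_(y in ~:S) b (y |: (S :\ x)).
Proof.
move=> HS.
transitivity (\sum_(x in S) \sum_(y in ~:S) \sum_(T : {set 'I_n} | #|T| == l)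
     (T == y |: (S :\ x))%:R * b T); last first.
  apply: eq_bigr => x xS; apply: eq_bigr => y yS.
  rewrite (bigD1 (y |: (S :\ x))) /=; last by rewrite card_swap // HS.
  rewrite eqxx mul1r big1 ?addr0 // => T /andP[_ /negPf ->]; by rewrite mul0r.
under [RHS]eq_bigr do rewrite exchange_big.
rewrite [RHS]exchange_big; apply: eq_bigr => T /eqP HT.
under [RHS]eq_bigr do rewrite -mulr_suml.
rewrite -mulr_suml lemN // HS HT //.
Qed.


Lemma eigY (R : realFieldType) n l t (y : vec R n) (S : {set 'I_n}) :
  (l <= n)%N -> inY l t y -> #|S| = l ->
  \sum_(T : {set 'I_n} | #|T| == l) (adj S T)%:R * y T
    = lam l%:R (n - l)%:R t%:R * y S.
Proof.
move=> ln [c Hc] HS; rewrite (@adj_sum R n l S y HS).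
have cardC : #|~:S| = (n - l)%N.
  by have := cardsC S; rewrite card_ord HS; lia.
transitivity (\sum_(x in S) \sum_(z in ~:S) \sum_(phi | seq_distinct phi)
    c phi * u_vec R phi (z |: (S :\ x))).
  apply: eq_bigr => x xS; apply: eq_bigr => z zS; apply: Hc; by rewrite card_swap.
under eq_bigr do rewrite exchange_big.
rewrite exchange_big (Hc S HS) mulr_sumr; apply: eq_bigr => phi Hphi.
under eq_bigr do rewrite -mulr_sumr.
rewrite -mulr_sumr.
have [_ _ EM] := @eig R n S t _ (@sd_Dist _ _ _ Hphi).
rewrite (_ : u_vec R phi = uu R (fun i => phi i)) // EM cardC HS.
by rewrite mulrCA.
Qed.

Lemma yzero (R : realFieldType) n l t (y : vec R n) : inY l t y -> (n < t + t)%N ->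
  forall S : {set 'I_n}, #|S| = l -> y S = 0.
Proof.
move=> [c Hc] H S HS; rewrite Hc // big1 // => phi Hphi.
by have := @sd_card _ _ _ (@sd_Dist _ _ _ Hphi); rewrite leqNgt H.
Qed.

Lemma symQ (R : realFieldType) n l (a b : vec R n) :
  \sum_(S : {set 'I_n} | #|S| == l) a S * (\sum_(T : {set 'I_n} | #|T| == l) (adj S T)%:R * b T)
  = \sum_(S : {set 'I_n} | #|S| == l) b S * (\sum_(T : {set 'I_n} | #|T| == l) (adj S T)%:R * a T).
Proof.
under eq_bigr do rewrite mulr_sumr.
under [RHS]eq_bigr do rewrite mulr_sumr.
rewrite exchange_big; apply: eq_bigr => S _; apply: eq_bigr => T _.
by rewrite /adj setUC; ring.
Qed.

Theorem lemma7 (R : realFieldType) (n l m : nat) (v : vec R n) :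
  (1 <= l)%N -> (l <= n)%N -> (m <= l)%N ->
  inYsum l m v ->
  \sum_(i < n) \sum_(j < n) Vmat l v i j >=
    ((l%:R - m%:R) * n%:R - l%:R ^+ 2) * sqnorm l v.
Proof.
move=> l1 ln ml [y [Hy Hv]].
set lt := fun t : nat => lam (l%:R : R) (n - l)%:R t%:R.
have hn : (n%:R : R) = l%:R + (n - l)%:R by rewrite -natrD subnKC.
have Hy' : forall t : 'I_m.+1, inY l t (y t) by move=> t; apply: Hy; rewrite -ltnS.
have eigv : forall (t : 'I_m.+1) (S : {set 'I_n}), #|S| = l ->
    \sum_(T : {set 'I_n} | #|T| == l) (adj S T)%:R * y t T = lt t * y t S.
  by move=> t S HS; apply: eigY.
set ip := fun s t : 'I_m.+1 => \sum_(S : {set 'I_n} | #|S| == l) y s S * y t S.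
have orth : forall s t : 'I_m.+1, s != t -> ip s t = 0.
  move=> s t st.
  have E1 : \sum_(S : {set 'I_n} | #|S| == l) y s S *
      (\sum_(T : {set 'I_n} | #|T| == l) (adj S T)%:R * y t T) = lt t * ip s t.
    rewrite /ip mulr_sumr; apply: eq_bigr => S /eqP HS; by rewrite eigv // mulrCA.
  have E2 : \sum_(S : {set 'I_n} | #|S| == l) y t S *
      (\sum_(T : {set 'I_n} | #|T| == l) (adj S T)%:R * y s T) = lt s * ip s t.
    rewrite /ip mulr_sumr; apply: eq_bigr => S /eqP HS; rewrite eigv //; ring.
  have h : (lt t - lt s) * ip s t = 0 by rewrite mulrBl -E1 -E2 symQ subrr.
  case: (leqP (t + t) n) => Ht; last first.
    by rewrite /ip big1 // => S /eqP HS; rewrite (@yzero _ _ _ _ _ (Hy' t)) // mulr0.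
  case: (leqP (s + s) n) => Hs; last first.
    by rewrite /ip big1 // => S /eqP HS; rewrite (@yzero _ _ _ _ _ (Hy' s)) // mul0r.
  move/eqP: h; rewrite mulf_eq0 => /orP[|/eqP //].
  have -> : lt t - lt s = (s%:R - t%:R) * ((n.+1)%:R - (s + t)%:R).
    by rewrite /lt /lam -natr1 natrD hn; ring.
  rewrite mulf_eq0 !subr_eq0 !eqr_nat => /orP[/eqP E|/eqP E].
    by move: st; rewrite -(inj_eq val_inj) /= E eqxx.
  lia.
have ipv : forall t : 'I_m.+1,
    \sum_(S : {set 'I_n} | #|S| == l) v S * y t S = ip t t.
  move=> t; transitivity (\sum_(S : {set 'I_n} | #|S| == l)
      \sum_(s < m.+1) y s S * y t S).
    by apply: eq_bigr => S /eqP HS; rewrite Hv // mulr_suml.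
  rewrite exchange_big (bigD1 t) //= [X in _ + X]big1 ?addr0 // => s st; exact: orth.
rewrite sumV.
have Q1 : \sum_(S : {set 'I_n} | #|S| == l) \sum_(T : {set 'I_n} | #|T| == l)
     v S * v T * (adj S T)%:R = \sum_(t < m.+1) lt t * ip t t.
  transitivity (\sum_(S : {set 'I_n} | #|S| == l) v S * \sum_(t < m.+1) lt t * y t S).
    apply: eq_bigr => S /eqP HS.
    transitivity (v S * \sum_(T : {set 'I_n} | #|T| == l) (adj S T)%:R * v T).
      by rewrite mulr_sumr; apply: eq_bigr => T _; ring.
    congr (_ * _).
    transitivity (\sum_(T : {set 'I_n} | #|T| == l) \sum_(t < m.+1) (adj S T)%:R * y t T).
      by apply: eq_bigr => T /eqP HT; rewrite Hv // mulr_sumr.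
    by rewrite exchange_big; apply: eq_bigr => t _; exact: eigv.
  under eq_bigr do rewrite mulr_sumr.
  rewrite exchange_big; apply: eq_bigr => t _; rewrite -ipv mulr_sumr.
  by apply: eq_bigr => S _; ring.
have sq : sqnorm l v = \sum_(t < m.+1) ip t t.
  rewrite /sqnorm; transitivity (\sum_(S : {set 'I_n} | #|S| == l)
      \sum_(t < m.+1) v S * y t S).
    by apply: eq_bigr => S /eqP HS; rewrite expr2 {2}(Hv S HS) mulr_sumr.
  by rewrite exchange_big; apply: eq_bigr => t _; exact: ipv.
rewrite Q1 sq -subr_ge0 mulr_sumr -sumrB; apply: sumr_ge0 => t _.
set C := ((l%:R - m%:R) * n%:R - l%:R ^+ 2).
rewrite (_ : _ - _ = (lt t - C) * ip t t); last by ring.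
apply: mulr_ge0; last first.
  by apply: sumr_ge0 => S _; rewrite -expr2 sqr_ge0.
have tm : (t <= m)%N by rewrite -ltnS.
have -> : lt t - C = (m%:R - t%:R) * n%:R + (t%:R * t%:R - t%:R).
  by rewrite /lt /C /lam hn; ring.
apply: addr_ge0; first by apply: mulr_ge0; rewrite ?subr_ge0 ?ler_nat.
case: (posnP t) => [->|tp]; first by rewrite mulr0 subr0.
rewrite -{3}(mulr1 (t%:R)) -mulrBr; apply: mulr_ge0 => //.
by rewrite subr_ge0 ler1n.
Qed.
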